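(* Let $\omega\in\Omega$ and let $C_\infty$ be an infinite contour of $\phi(\omega)$. Let $G\setminus C_\infty$ be the graph obtained from $G$ by removing all edges of $G$ crossed by edges of $C_\infty$. Then each infinite connected component of $G\setminus C_\infty$ contains an infinite cluster of $\omega$ that is incident to $C_\infty$.
   Context: Let $G$ be the square grid with vertex set $\mathbb{Z}^2$ and nearest-neighbour edges (unit segments). The face of $G$ with lower-left corner $(m,n)$ is black if $m+n$ is even, white otherwise. $\Omega\subset\{0,1\}^{\mathbb{Z}^2}$ is the set of $\omega$ such that for every black face the states of its four vertices, listed clockwise from the lower-left corner, form one of $0000,1111,0011,1100,0110,1001$. A cluster of $\omega$ is a maximal $G$-connected set of vertices on which $\omega$ is constant, infinite if it has infinitely many vertices. Let $\mathbb{L}_1$ have vertices $(m-\tfrac12,n+\tfrac12)$, $m,n$ both even, and $\mathbb{L}_2$ vertices $(m-\tfrac12,n+\tfrac12)$, $m,n$ both odd; in each, two vertices are joined by an edge (a closed segment of length $2$) iff at Euclidean distance $2$. The center of each black face $F$ is the midpoint of exactly one edge $e_1$ of $\mathbb{L}_1$ and one edge $e_2$ of $\mathbb{L}_2$. Define $\phi(\omega)\in\{0,1\}^{E(\mathbb{L}_1)\cup E(\mathbb{L}_2)}$: if the configuration around $F$ is $0000$ or $1111$ both get $0$; if the two upper vertices share a state different from the two lower ones, the horizontal one of $e_1,e_2$ gets $1$, the vertical $0$; if the two left vertices share a state different from the two right ones, the vertical one gets $1$, the horizontal $0$. Edges with value $1$ are present; a contour is a connected component of the set of present edges, infinite if it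 has infinitely many edges. A cluster is incident to a contour if some vertex of the cluster is at Euclidean distance $\tfrac12$ from some edge (segment) of the contour. *)

(* Defs.v *)
From Stdlib Require Import ZArith Reals Relations List.

Definition vertex : Type := (Z * Z)%type.

(* A configuration omega in {0,1}^{Z^2}; false = 0, true = 1. *)
Definition config : Type := vertex -> bool.

(* The face with lower-left corner (m,n) is black iff m+n is even. *)
Definition black (m n : Z) : Prop := Z.even (m + n) = true.

(* Allowed patterns, vertices listed clockwise from the lower-left corner:
   LL = (m,n), UL = (m,n+1), UR = (m+1,n+1), LR = (m+1,n). *)
Definition allowed (a b c d : bool) : Prop :=
  (a, b, c, d) = (false, false, false, false) \/
  (a, b, c, d) = (true, true, true, true) \/
  (a, b, c, d) = (false, false, true, true) \/
  (a, b, c, d) = (true, true, false, false) \/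
  (a, b, c, d) = (false, true, true, false) \/
  (a, b, c, d) = (true, false, false, true).

Definition in_Omega (w : config) : Prop :=
  forall m n : Z, black m n ->
    allowed (w (m, n)) (w (m, (n + 1)%Z)) (w ((m + 1)%Z, (n + 1)%Z)) (w ((m + 1)%Z, n)).

Definition adjG (u v : vertex) : Prop :=
  (Z.abs (fst u - fst v) + Z.abs (snd u - snd v) = 1)%Z.

Definition point : Type := (R * R)%type.

Definition ptZ (v : vertex) : point := (IZR (fst v), IZR (snd v)).

Definition on_seg (A B P : point) : Prop :=
  exists t : R, (0 <= t <= 1)%R /\
    P = (fst A + t * (fst B - fst A), snd A + t * (snd B - snd A))%R.

Definition segs_meet (A B C D : point) : Prop :=
  exists P, on_seg A B P /\ on_seg C D P.

Definition dist2 (P Q : point) : R :=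
  ((fst P - fst Q) ^ 2 + (snd P - snd Q) ^ 2)%R.

Definition seg_dist_is (A B P : point) (d : R) : Prop :=
  (exists Q, on_seg A B Q /\ dist2 P Q = (d ^ 2)%R) /\
  (forall Q, on_seg A B Q -> (d ^ 2 <= dist2 P Q)%R).

(* Every edge of L1 or L2 has as midpoint the center of a unique black face,
   and is horizontal or vertical; conversely the center of the black face F
   with lower-left corner (m,n) is the midpoint of exactly one horizontal and
   one vertical edge of L1 \cup L2 (one in L1, the other in L2).  We therefore
   index E(L1) \cup E(L2) by (m, n, orientation) with (m,n) black. *)
Inductive orient : Type := Hor | Ver.

Definition cedge : Type := (Z * Z * orient)%type.

Definition valid_cedge (e : cedge) : Prop :=
  let '(m, n, _) := e in black m n.

Definition cedge_A (e : cedge) : point :=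
  let '(m, n, o) := e in
  match o with
  | Hor => (IZR m - 1/2, IZR n + 1/2)%R
  | Ver => (IZR m + 1/2, IZR n - 1/2)%R
  end.

Definition cedge_B (e : cedge) : point :=
  let '(m, n, o) := e in
  match o with
  | Hor => (IZR m + 3/2, IZR n + 1/2)%R
  | Ver => (IZR m + 1/2, IZR n + 3/2)%R
  end.

(* phi(omega)(e) = 1, i.e. the edge e is present. *)
Definition present (w : config) (e : cedge) : Prop :=
  let '(m, n, o) := e in
  black m n /\
  let a := w (m, n) in
  let b := w (m, (n + 1)%Z) in
  let c := w ((m + 1)%Z, (n + 1)%Z) in
  let d := w ((m + 1)%Z, n) in
  match o with
  | Hor => b = c /\ a = d /\ b <> a
  | Ver => a = b /\ c = d /\ a <> c
  end.

Definition cadj (w : config) (e f : cedge) : Prop :=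
  present w e /\ present w f /\
  segs_meet (cedge_A e) (cedge_B e) (cedge_A f) (cedge_B f).

(* C is a contour of phi(omega): a connected component of the set of present
   edges (connectedness of the union of the closed segments). *)
Definition is_contour (w : config) (C : cedge -> Prop) : Prop :=
  exists e0, present w e0 /\
    forall e, C e <-> clos_refl_trans cedge (cadj w) e0 e.

Definition infinite {T : Type} (P : T -> Prop) : Prop :=
  forall l : list T, exists x, P x /\ ~ In x l.

Definition crossed (C : cedge -> Prop) (u v : vertex) : Prop :=
  exists e, C e /\ segs_meet (ptZ u) (ptZ v) (cedge_A e) (cedge_B e).

Definition adj_minus (C : cedge -> Prop) (u v : vertex) : Prop :=
  adjG u v /\ ~ crossed C u v.

Definition is_component_minus (C : cedge -> Prop) (K : vertex -> Prop) : Prop :=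
  exists v0, forall v, K v <-> clos_refl_trans vertex (adj_minus C) v0 v.

(* Cl is a cluster of omega: a maximal G-connected set on which omega is
   constant, i.e. the class of some v0 for G-paths along which omega is constant. *)
Definition is_cluster (w : config) (Cl : vertex -> Prop) : Prop :=
  exists v0, forall v,
    Cl v <-> clos_refl_trans vertex (fun x y => adjG x y /\ w x = w y) v0 v.

Definition incident (Cl : vertex -> Prop) (C : cedge -> Prop) : Prop :=
  exists v e, Cl v /\ C e /\ seg_dist_is (cedge_A e) (cedge_B e) (ptZ v) (1/2)%R.

(* Main.v *)
Require Import Defs.
From Stdlib Require Import ZArith Reals Relations List Lia Lra Bool Classical ClassicalEpsilon.
Open Scope Z_scope.

Lemma pair_eqR (a b c d : R) : a = c -> b = d -> (a, b) = (c, d).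
Proof. intros; subst; reflexivity. Qed.

Lemma geo1h x y m n o :
  segs_meet (ptZ (x,y)) (ptZ (x+1,y)) (cedge_A (m,n,o)) (cedge_B (m,n,o)) ->
  o = Ver /\ x = m /\ (y = n \/ y = n+1).
Proof.
  intros [P [[t [Ht HP]] [s [Hs HQ]]]].
  rewrite HP in HQ. unfold ptZ in HQ. simpl in HQ. rewrite plus_IZR in HQ.
  destruct o; simpl in HQ; injection HQ as Hx Hy; ring_simplify in Hx; ring_simplify in Hy.
  - exfalso. 
    assert (y < n + 1) by (apply lt_IZR; rewrite plus_IZR; lra).
    assert (n < y) by (apply lt_IZR; lra). lia.
  - assert (m - 1 < x) by (apply lt_IZR; rewrite minus_IZR; lra).
    assert (x < m + 1) by (apply lt_IZR; rewrite plus_IZR; lra).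
    assert (n - 1 < y) by (apply lt_IZR; rewrite minus_IZR; lra).
    assert (y < n + 2) by (apply lt_IZR; rewrite plus_IZR; lra).
    repeat split; auto; lia.
Qed.

Lemma geo1v x y m n o :
  segs_meet (ptZ (x,y)) (ptZ (x,y+1)) (cedge_A (m,n,o)) (cedge_B (m,n,o)) ->
  o = Hor /\ y = n /\ (x = m \/ x = m+1).
Proof.
  intros [P [[t [Ht HP]] [s [Hs HQ]]]].
  rewrite HP in HQ. unfold ptZ in HQ. simpl in HQ. rewrite plus_IZR in HQ.
  destruct o; simpl in HQ; injection HQ as Hx Hy; ring_simplify in Hx; ring_simplify in Hy.
  - assert (n - 1 < y) by (apply lt_IZR; rewrite minus_IZR; lra).
    assert (y < n + 1) by (apply lt_IZR; rewrite plus_IZR; lra).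
    assert (m - 1 < x) by (apply lt_IZR; rewrite minus_IZR; lra).
    assert (x < m + 2) by (apply lt_IZR; rewrite plus_IZR; lra).
    repeat split; auto; lia.
  - exfalso.
    assert (x < m + 1) by (apply lt_IZR; rewrite plus_IZR; lra).
    assert (m < x) by (apply lt_IZR; lra). lia.
Qed.

Definition node (p q : Z) (e : cedge) : Prop :=
  e = (p-1,q,Hor) \/ e = (p+1,q,Hor) \/ e = (p,q-1,Ver) \/ e = (p,q+1,Ver).

Ltac teq := apply pair_equal_spec; split; [apply pair_equal_spec; split; lia | reflexivity].
Ltac solve_node := unfold node;
  first [ left; teq
        | right; left; teq
        | right; right; left; teq
        | right; right; right; teq ].

Lemma black_ex m n : black m n -> exists k, m + n = 2 * k.
Proof. unfold black. intros H. apply Z.even_spec in H. exact H. Qed.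

Lemma present_black w m n o : present w (m,n,o) -> black m n.
Proof. unfold present. tauto. Qed.

Lemma present_HV w m n : present w (m,n,Hor) -> present w (m,n,Ver) -> False.
Proof. unfold present. simpl. intros [_ [H1 [H2 H3]]] [_ [H4 [H5 H6]]]. congruence. Qed.

Lemma segs_meet_sym A B C D : segs_meet A B C D -> segs_meet C D A B.
Proof. intros [P [H1 H2]]. exists P; auto. Qed.

Ltac zb := apply lt_IZR; rewrite ?plus_IZR, ?minus_IZR; lra.

Lemma geo2_HV w m n m' n' :
  present w (m,n,Hor) -> present w (m',n',Ver) ->
  segs_meet (cedge_A (m,n,Hor)) (cedge_B (m,n,Hor)) (cedge_A (m',n',Ver)) (cedge_B (m',n',Ver)) ->
  exists p q, node p q (m,n,Hor) /\ node p q (m',n',Ver).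
Proof.
  intros He Hf [P [[t [Ht HP]] [s [Hs HQ]]]].
  rewrite HP in HQ. simpl in HQ. injection HQ as Hx Hy.
  ring_simplify in Hx. ring_simplify in Hy.
  destruct (black_ex _ _ (present_black _ _ _ _ He)) as [k Hk].
  destruct (black_ex _ _ (present_black _ _ _ _ Hf)) as [k' Hk'].
  assert (m - 2 < m') by zb. assert (m' < m + 2) by zb.
  assert (n - 2 < n') by zb. assert (n' < n + 2) by zb.
  assert (Hc : (m' = m - 1 \/ m' = m + 1) /\ (n' = n - 1 \/ n' = n + 1) \/ (m' = m /\ n' = n)) by lia.
  destruct Hc as [[[E1|E1] [E2|E2]] | [E1 E2]]; subst m' n';
    try (exfalso; eapply present_HV; eassumption);
    first [ exists (m-1), n; split; solve_node | exists (m+1), n; split; solve_node ].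
Qed.

Lemma geo2 w e f :
  present w e -> present w f ->
  segs_meet (cedge_A e) (cedge_B e) (cedge_A f) (cedge_B f) ->
  e = f \/ exists p q, node p q e /\ node p q f.
Proof.
  destruct e as [[m n] o], f as [[m' n'] o']. intros He Hf Hm.
  destruct o, o'.
  - destruct Hm as [P [[t [Ht HP]] [s [Hs HQ]]]].
    rewrite HP in HQ. simpl in HQ. injection HQ as Hx Hy.
    ring_simplify in Hx. ring_simplify in Hy.
    destruct (black_ex _ _ (present_black _ _ _ _ He)) as [k Hk].
    destruct (black_ex _ _ (present_black _ _ _ _ Hf)) as [k' Hk'].
    assert (n - 1 < n') by zb. assert (n' < n + 1) by zb.
    assert (m - 3 < m') by zb. assert (m' < m + 3) by zb.
    assert (n' = n) by lia. subst n'.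
    assert (Hc : m' = m - 2 \/ m' = m \/ m' = m + 2) by lia.
    destruct Hc as [E|[E|E]]; subst m'.
    + right. exists (m-1), n. split; solve_node.
    + left; reflexivity.
    + right. exists (m+1), n. split; solve_node.
  - right. eapply geo2_HV; eauto.
  - right. destruct (geo2_HV w m' n' m n Hf He (segs_meet_sym _ _ _ _ Hm)) as [p [q [H1 H2]]].
    exists p, q; auto.
  - destruct Hm as [P [[t [Ht HP]] [s [Hs HQ]]]].
    rewrite HP in HQ. simpl in HQ. injection HQ as Hx Hy.
    ring_simplify in Hx. ring_simplify in Hy.
    destruct (black_ex _ _ (present_black _ _ _ _ He)) as [k Hk].
    destruct (black_ex _ _ (present_black _ _ _ _ Hf)) as [k' Hk'].
    assert (m - 1 < m') by zb. assert (m' < m + 1) by zb.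
    assert (n - 3 < n') by zb. assert (n' < n + 3) by zb.
    assert (m' = m) by lia. subst m'.
    assert (Hc : n' = n - 2 \/ n' = n \/ n' = n + 2) by lia.
    destruct Hc as [E|[E|E]]; subst n'.
    + right. exists m, (n-1). split; solve_node.
    + left; reflexivity.
    + right. exists m, (n+1). split; solve_node.
Qed.

Lemma node_pt p q e : node p q e ->
  on_seg (cedge_A e) (cedge_B e) (IZR p + 1/2, IZR q + 1/2)%R.
Proof.
  unfold node; intros [H|[H|[H|H]]]; subst e; simpl.
  - exists 1%R; split; [lra|]. apply pair_eqR; simpl; rewrite ?minus_IZR, ?plus_IZR; lra.
  - exists 0%R; split; [lra|]. apply pair_eqR; simpl; rewrite ?minus_IZR, ?plus_IZR; lra.
  - exists 1%R; split; [lra|]. apply pair_eqR; simpl; rewrite ?minus_IZR, ?plus_IZR; lra.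
  - exists 0%R; split; [lra|]. apply pair_eqR; simpl; rewrite ?minus_IZR, ?plus_IZR; lra.
Qed.

Lemma cadj_node w p q e f : present w e -> present w f -> node p q e -> node p q f -> cadj w e f.
Proof.
  intros. unfold cadj. split; [|split]; auto.
  exists (IZR p + 1/2, IZR q + 1/2)%R. split; apply node_pt; auto.
Qed.

Lemma cross_Hor_side m n x y : (x = m \/ x = m+1) -> y = n ->
  segs_meet (ptZ (x,y)) (ptZ (x,y+1)) (cedge_A (m,n,Hor)) (cedge_B (m,n,Hor)).
Proof.
  intros Hx Hy. subst y. exists (IZR x, IZR n + 1/2)%R. unfold ptZ; simpl. split.
  - exists (1/2)%R. split; [lra|]. apply pair_eqR; simpl; rewrite ?plus_IZR; lra.
  - destruct Hx; subst x.
    + exists (1/4)%R. split; [lra|]. apply pair_eqR; simpl; lra.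
    + exists (3/4)%R. split; [lra|]. apply pair_eqR; simpl; rewrite ?plus_IZR; lra.
Qed.

Lemma cross_Ver_side m n x y : x = m -> (y = n \/ y = n+1) ->
  segs_meet (ptZ (x,y)) (ptZ (x+1,y)) (cedge_A (m,n,Ver)) (cedge_B (m,n,Ver)).
Proof.
  intros Hx Hy. subst x. exists (IZR m + 1/2, IZR y)%R. unfold ptZ; simpl. split.
  - exists (1/2)%R. split; [lra|]. apply pair_eqR; simpl; rewrite ?plus_IZR; lra.
  - destruct Hy; subst y.
    + exists (1/4)%R. split; [lra|]. apply pair_eqR; simpl; lra.
    + exists (3/4)%R. split; [lra|]. apply pair_eqR; simpl; rewrite ?plus_IZR; lra.
Qed.

Definition cornerPQ (m n : Z) (v : vertex) : Prop :=
  (fst v = m \/ fst v = m+1) /\ (snd v = n \/ snd v = n+1).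
Definition corner (e : cedge) (v : vertex) : Prop :=
  let '(m,n,_) := e in cornerPQ m n v.

Lemma corner_dist e v : corner e v -> seg_dist_is (cedge_A e) (cedge_B e) (ptZ v) (1/2).
Proof.
  destruct e as [[m n] o]. destruct v as [x y]. unfold corner, cornerPQ; simpl.
  intros [Hx Hy]. unfold seg_dist_is, dist2, ptZ; simpl.
  destruct o; simpl.
  - split.
    + exists (IZR x, IZR n + 1/2)%R. split.
      * destruct Hx; subst x.
        -- exists (1/4)%R. split; [lra|]. apply pair_eqR; simpl; lra.
        -- exists (3/4)%R. split; [lra|]. apply pair_eqR; simpl; rewrite ?plus_IZR; lra.
      * simpl. destruct Hy; subst y; rewrite ?plus_IZR; lra.
    + intros Q [t [Ht HQ]]. subst Q. simpl.
      destruct Hy; subst y; rewrite ?plus_IZR; (match goal with |- (_ <= ?a * (?a * 1) + _)%R => pose proof (Rle_0_sqr a) as Hsq; unfold Rsqr in Hsq end); nra.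
  - split.
    + exists (IZR m + 1/2, IZR y)%R. split.
      * destruct Hy; subst y.
        -- exists (1/4)%R. split; [lra|]. apply pair_eqR; simpl; lra.
        -- exists (3/4)%R. split; [lra|]. apply pair_eqR; simpl; rewrite ?plus_IZR; lra.
      * simpl. destruct Hx; subst x; rewrite ?plus_IZR; lra.
    + intros Q [t [Ht HQ]]. subst Q. simpl.
      destruct Hx; subst x; rewrite ?plus_IZR; (match goal with |- (_ <= _ + ?a * (?a * 1))%R => pose proof (Rle_0_sqr a) as Hsq; unfold Rsqr in Hsq end); nra.
Qed.

Lemma on_seg_rev A B P : on_seg A B P -> on_seg B A P.
Proof.
  intros [t [Ht HP]]. exists (1 - t)%R. split; [lra|]. rewrite HP.
  apply pair_eqR; simpl; ring.
Qed.

Definition bP (P : Prop) : bool := if ClassicalEpsilon.excluded_middle_informative P then true else false.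
Lemma bP_true P : bP P = true <-> P.
Proof. unfold bP. destruct (ClassicalEpsilon.excluded_middle_informative P); split; intros; auto; try discriminate; contradiction. Qed.
Lemma bP_false P : bP P = false <-> ~ P.
Proof. unfold bP. destruct (ClassicalEpsilon.excluded_middle_informative P); split; intros; auto; try discriminate; contradiction. Qed.

Lemma adjG_sym u v : adjG u v -> adjG v u.
Proof. unfold adjG. lia. Qed.

Lemma parity8 (c1 c2 c3 c4 k1 k2 k3 k4 : bool) :
  (k1 || k2 || k3 || k4 = true ->
     (xorb c1 c2 = true -> k1 = true) /\ (xorb c4 c3 = true -> k2 = true) /\
     (xorb c1 c4 = true -> k3 = true) /\ (xorb c2 c3 = true -> k4 = true)) ->
  xorb (xorb (xorb c1 c2 && k1) (xorb c4 c3 && k2)) (xorb c1 c4 && k3) = xorb c2 c3 && k4.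
Proof.
  destruct c1, c2, c3, c4, k1, k2, k3, k4; simpl; intros H; try reflexivity;
    destruct H as [H1 [H2 [H3 H4]]]; auto; try (symmetry; auto); try (exfalso; discriminate (H1 eq_refl));
    try discriminate (H2 eq_refl); try discriminate (H3 eq_refl); try discriminate (H4 eq_refl).
Qed.


Lemma allowed_cases a b c d : allowed a b c d -> (a = b /\ c = d) \/ (a = d /\ b = c).
Proof.
  unfold allowed. intros H.
  repeat destruct H as [H|H]; injection H; intros; subst; auto.
Qed.

Lemma even_p1 a : Z.even (a + 1) = negb (Z.even a).
Proof. rewrite Z.even_add. simpl. destruct (Z.even a); reflexivity. Qed.
Lemma even_m1 a : Z.even (a - 1) = negb (Z.even a).
Proof. unfold Z.sub. rewrite Z.even_add. simpl. destruct (Z.even a); reflexivity. Qed.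

Section Model.
Variable w : config.
Hypothesis Hw : in_Omega w.

Lemma presH w0 m n : present w0 (m,n,Hor) <->
  black m n /\ w0 (m,n+1) = w0 (m+1,n+1) /\ w0 (m,n) = w0 (m+1,n) /\ w0 (m,n+1) <> w0 (m,n).
Proof. unfold present. simpl. tauto. Qed.
Lemma presV w0 m n : present w0 (m,n,Ver) <->
  black m n /\ w0 (m,n) = w0 (m,n+1) /\ w0 (m+1,n+1) = w0 (m+1,n) /\ w0 (m,n) <> w0 (m+1,n+1).
Proof. unfold present. simpl. tauto. Qed.

Lemma diff_H m n x : black m n -> (x = m \/ x = m+1) -> w (x,n) <> w (x,n+1) -> present w (m,n,Hor).
Proof.
  intros Hb Hx Hd. apply presH. pose proof (Hw m n Hb) as Ha.
  apply allowed_cases in Ha. split; auto.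
  destruct Hx; subst x; destruct Ha as [[E1 E2]|[E1 E2]]; try congruence.
  - repeat split; congruence.
  - repeat split; congruence.
Qed.

Lemma diff_V m n y : black m n -> (y = n \/ y = n+1) -> w (m,y) <> w (m+1,y) -> present w (m,n,Ver).
Proof.
  intros Hb Hy Hd. apply presV. pose proof (Hw m n Hb) as Ha.
  apply allowed_cases in Ha. split; auto.
  destruct Hy; subst y; destruct Ha as [[E1 E2]|[E1 E2]]; try congruence.
  - repeat split; congruence.
  - repeat split; congruence.
Qed.

Lemma presH_diff m n x : present w (m,n,Hor) -> (x = m \/ x = m+1) -> w (x,n) <> w (x,n+1).
Proof. intros H Hx. apply presH in H. destruct H as [_ [E1 [E2 E3]]]. destruct Hx; subst; congruence. Qed.
Lemma presH_same m n y : present w (m,n,Hor) -> (y = n \/ y = n+1) -> w (m,y) = w (m+1,y).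
Proof. intros H Hy. apply presH in H. destruct H as [_ [E1 [E2 E3]]]. destruct Hy; subst; congruence. Qed.
Lemma presV_diff m n y : present w (m,n,Ver) -> (y = n \/ y = n+1) -> w (m,y) <> w (m+1,y).
Proof. intros H Hy. apply presV in H. destruct H as [_ [E1 [E2 E3]]]. destruct Hy; subst; congruence. Qed.
Lemma presV_same m n x : present w (m,n,Ver) -> (x = m \/ x = m+1) -> w (x,n) = w (x,n+1).
Proof. intros H Hx. apply presV in H. destruct H as [_ [E1 [E2 E3]]]. destruct Hx; subst; congruence. Qed.

Variable C : cedge -> Prop.
Variable e0 : cedge.
Hypothesis He0 : present w e0.
Hypothesis HC : forall e, C e <-> clos_refl_trans cedge (cadj w) e0 e.

Lemma rt_present x y : clos_refl_trans cedge (cadj w) x y -> present w x -> present w y.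
Proof.
  induction 1; intros Hp; auto.
  destruct H as [_ [H _]]; auto.
Qed.

Lemma C_present e : C e -> present w e.
Proof. intros H. apply HC in H. eapply rt_present; eauto. Qed.

Lemma C_step e f : C e -> cadj w e f -> C f.
Proof. intros H1 H2. apply HC. apply HC in H1. eapply rt_trans; eauto. apply rt_step; auto. Qed.

Lemma C_node p q e f : C e -> present w f -> node p q e -> node p q f -> C f.
Proof. intros. eapply C_step; eauto. apply cadj_node with p q; auto. apply C_present; auto. Qed.

Definition own_h (x y : Z) : cedge := if Z.even (x+y) then (x,y,Ver) else (x,y-1,Ver).
Definition own_v (x y : Z) : cedge := if Z.even (x+y) then (x,y,Hor) else (x-1,y,Hor).

Lemma black_even m n : black m n <-> Z.even (m+n) = true.
Proof. reflexivity. Qed.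

Lemma crossed_h_iff x y : crossed C (x,y) (x+1,y) <-> C (own_h x y).
Proof.
  unfold own_h. split.
  - intros [[[m n] o] [Ce Hm]]. apply geo1h in Hm. destruct Hm as [Ho [Hx Hy]]. subst o x.
    pose proof (present_black _ _ _ _ (C_present _ Ce)) as Hb. unfold black in Hb.
    destruct Hy as [Hy|Hy]; subst y.
    + rewrite Hb. auto.
    + rewrite Z.add_assoc, even_p1, Hb. simpl. replace (n+1-1) with n by lia. auto.
  - destruct (Z.even (x+y)) eqn:E; intros Hc; eexists; split; eauto.
    + apply cross_Ver_side; auto.
    + apply cross_Ver_side; auto. right; lia.
Qed.

Lemma crossed_v_iff x y : crossed C (x,y) (x,y+1) <-> C (own_v x y).
Proof.
  unfold own_v. split.
  - intros [[[m n] o] [Ce Hm]]. apply geo1v in Hm. destruct Hm as [Ho [Hy Hx]]. subst o y.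
    pose proof (present_black _ _ _ _ (C_present _ Ce)) as Hb. unfold black in Hb.
    destruct Hx as [Hx|Hx]; subst x.
    + rewrite Hb. auto.
    + replace (m+1+n) with (m+n+1) by ring. rewrite even_p1, Hb. simpl. replace (m+1-1) with m by lia. auto.
  - destruct (Z.even (x+y)) eqn:E; intros Hc; eexists; split; eauto.
    + apply cross_Hor_side; auto.
    + apply cross_Hor_side; auto. right; lia.
Qed.

Lemma diff_own_h x y : w (x,y) <> w (x+1,y) -> present w (own_h x y).
Proof.
  unfold own_h. destruct (Z.even (x+y)) eqn:E; intros Hd.
  - apply diff_V with y; auto.
  - apply diff_V with y; auto. unfold black. replace (x+(y-1)) with (x+y-1) by ring.
    rewrite even_m1, E. reflexivity. right; lia.
Qed.

Lemma diff_own_v x y : w (x,y) <> w (x,y+1) -> present w (own_v x y).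
Proof.
  unfold own_v. destruct (Z.even (x+y)) eqn:E; intros Hd.
  - apply diff_H with x; auto.
  - apply diff_H with x; auto. unfold black. replace (x-1+y) with (x+y-1) by ring.
    rewrite even_m1, E. reflexivity. right; lia.
Qed.

Lemma owners_even x y : Z.even (x+y) = true ->
  own_h x y = (x,y,Ver) /\ own_h x (y+1) = (x,y,Ver) /\ own_v x y = (x,y,Hor) /\ own_v (x+1) y = (x,y,Hor).
Proof.
  intros E. unfold own_h, own_v.
  rewrite Z.add_assoc, even_p1, E. replace (x+1+y) with (x+y+1) by ring. rewrite even_p1, E. simpl.
  rewrite !Z.add_simpl_r. auto.
Qed.

Lemma owners_odd x y : Z.even (x+y) = false ->
  own_h x y = (x,y-1,Ver) /\ own_h x (y+1) = (x,y+1,Ver) /\ own_v x y = (x-1,y,Hor) /\ own_v (x+1) y = (x+1,y,Hor).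
Proof.
  intros E. unfold own_h, own_v.
  rewrite Z.add_assoc, even_p1, E. replace (x+1+y) with (x+y+1) by ring. rewrite even_p1, E. simpl. auto.
Qed.

Definition own4 x y := own_h x y :: own_h x (y+1) :: own_v x y :: own_v (x+1) y :: nil.

Lemma face_coh x y s t : In s (own4 x y) -> In t (own4 x y) -> C s -> present w t -> C t.
Proof.
  unfold own4. destruct (Z.even (x+y)) eqn:E.
  - destruct (owners_even x y E) as [E1 [E2 [E3 E4]]]. rewrite E1, E2, E3, E4.
    simpl. intros Hs Ht Cs Pt.
    repeat destruct Hs as [Hs|Hs]; repeat destruct Ht as [Ht|Ht]; subst; auto; try contradiction;
      exfalso; pose proof (C_present _ Cs); eapply present_HV; eauto.
  - destruct (owners_odd x y E) as [E1 [E2 [E3 E4]]]. rewrite E1, E2, E3, E4.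
    simpl. intros Hs Ht Cs Pt.
    repeat destruct Hs as [Hs|Hs]; repeat destruct Ht as [Ht|Ht]; subst; try contradiction;
      (eapply C_node with (p:=x) (q:=y); [eassumption|assumption|solve_node|solve_node]).
Qed.


Lemma crossed_sym u v : crossed C u v -> crossed C v u.
Proof. intros [e [Ce [P [H1 H2]]]]. exists e; split; auto. exists P; split; auto. apply on_seg_rev; auto. Qed.

Variable u0 : vertex.
Definition same (x y : vertex) : Prop := adjG x y /\ w x = w y.
Definition Cl (v : vertex) : Prop := clos_refl_trans vertex same u0 v.

Lemma Cl_step a b : Cl a -> adjG a b -> w a = w b -> Cl b.
Proof. intros H1 H2 H3. unfold Cl in *. eapply rt_trans; eauto. apply rt_step. split; auto. Qed.

Lemma Cl_diff a b : adjG a b -> Cl a -> ~ Cl b -> w a <> w b.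
Proof. intros Hab Ha Hb E. apply Hb. eapply Cl_step; eauto. Qed.

Definition cl (v : vertex) : bool := bP (Cl v).

Lemma xor_cl a b : xorb (cl a) (cl b) = true -> (Cl a /\ ~ Cl b) \/ (~ Cl a /\ Cl b).
Proof.
  unfold cl. destruct (bP (Cl a)) eqn:Ea, (bP (Cl b)) eqn:Eb; simpl; intros H; try discriminate.
  - left. split. apply bP_true; auto. apply bP_false; auto.
  - right. split. apply bP_false; auto. apply bP_true; auto.
Qed.

Lemma side_diff a b : adjG a b -> xorb (cl a) (cl b) = true -> w a <> w b.
Proof.
  intros Hab H. apply xor_cl in H. destruct H as [[H1 H2]|[H1 H2]].
  - apply Cl_diff; auto.
  - intros E. apply (Cl_diff b a); auto. apply adjG_sym; auto.
Qed.

Definition dh (x y : Z) : bool := xorb (cl (x,y)) (cl (x+1,y)) && bP (C (own_h x y)).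
Definition dv (x y : Z) : bool := xorb (cl (x,y)) (cl (x,y+1)) && bP (C (own_v x y)).

Lemma face_parity x y : xorb (xorb (dh x y) (dh x (y+1))) (dv x y) = dv (x+1) y.
Proof.
  unfold dh, dv. apply parity8.
  intros Hk.
  assert (Hs : exists s, In s (own4 x y) /\ C s).
  { unfold own4. repeat rewrite orb_true_iff in Hk.
    destruct Hk as [[[Hk|Hk]|Hk]|Hk]; rewrite bP_true in Hk.
    - exists (own_h x y); split; [unfold own4; cbn [In]; tauto | exact Hk].
    - exists (own_h x (y+1)); split; [unfold own4; cbn [In]; tauto | exact Hk].
    - exists (own_v x y); split; [unfold own4; cbn [In]; tauto | exact Hk].
    - exists (own_v (x+1) y); split; [unfold own4; cbn [In]; tauto | exact Hk]. }
  destruct Hs as [s [Hs Cs]].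
  assert (Hadj1 : adjG (x,y) (x+1,y)) by (unfold adjG; simpl; lia).
  assert (Hadj2 : adjG (x,y+1) (x+1,y+1)) by (unfold adjG; simpl; lia).
  assert (Hadj3 : adjG (x,y) (x,y+1)) by (unfold adjG; simpl; lia).
  assert (Hadj4 : adjG (x+1,y) (x+1,y+1)) by (unfold adjG; simpl; lia).
  repeat split; intros Hx; apply bP_true; eapply face_coh with (s := s); eauto; unfold own4; simpl; try tauto.
  - apply diff_own_h. apply side_diff; auto.
  - apply diff_own_h. apply side_diff; auto.
  - apply diff_own_v. apply side_diff; auto.
  - apply diff_own_v. apply side_diff; auto.
Qed.

Variable B : Z.
Hypothesis HB : forall v, Cl v -> Z.abs (fst v) <= B /\ Z.abs (snd v) <= B.

Lemma notCl x y : (B < Z.abs x \/ B < Z.abs y) -> ~ Cl (x,y).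
Proof. intros H HC'. apply HB in HC'. simpl in HC'. lia. Qed.

Lemma dh_zero x y : ~ Cl (x,y) -> ~ Cl (x+1,y) -> dh x y = false.
Proof.
  intros H1 H2. unfold dh, cl. rewrite (proj2 (bP_false _) H1), (proj2 (bP_false _) H2). reflexivity.
Qed.
Lemma dv_zero x y : ~ Cl (x,y) -> ~ Cl (x,y+1) -> dv x y = false.
Proof.
  intros H1 H2. unfold dv, cl. rewrite (proj2 (bP_false _) H1), (proj2 (bP_false _) H2). reflexivity.
Qed.

Fixpoint xs (n : nat) (x y : Z) : bool :=
  match n with O => false | S n => xorb (dh x y) (xs n (x+1) y) end.
Definition chi (x y : Z) : bool := xs (Z.to_nat (B+1-x)) x y.

Lemma chi_far x y : B + 1 <= x -> chi x y = false.
Proof. intros H. unfold chi. replace (Z.to_nat (B+1-x)) with O by lia. reflexivity. Qed.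

Lemma chi_h x y : chi x y = xorb (dh x y) (chi (x+1) y).
Proof.
  destruct (Z_lt_ge_dec x (B+1)).
  - unfold chi at 1. replace (Z.to_nat (B+1-x)) with (S (Z.to_nat (B+1-(x+1)))) by lia. reflexivity.
  - rewrite !chi_far by lia. rewrite dh_zero; auto; apply notCl; lia.
Qed.

Lemma chi_v_aux n : forall x, Z.to_nat (B+1-x) = n -> forall y, xorb (chi x y) (chi x (y+1)) = dv x y.
Proof.
  induction n; intros x Hn y.
  - rewrite !chi_far by lia. rewrite dv_zero; auto; apply notCl; lia.
  - rewrite (chi_h x y), (chi_h x (y+1)).
    pose proof (IHn (x+1) ltac:(lia) y) as IH.
    pose proof (face_parity x y) as FP.
    destruct (chi (x+1) y), (chi (x+1) (y+1)), (dh x y), (dh x (y+1)), (dv x y), (dv (x+1) y);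
      simpl in *; congruence.
Qed.

Lemma chi_v x y : xorb (chi x y) (chi x (y+1)) = dv x y.
Proof. apply (chi_v_aux _ x eq_refl). Qed.

Lemma chi_h' x y : xorb (chi x y) (chi (x+1) y) = dh x y.
Proof. rewrite chi_h. destruct (dh x y), (chi (x+1) y); reflexivity. Qed.

Definition chiv (v : vertex) : bool := chi (fst v) (snd v).

Lemma xorb_true_iff' a b : xorb a b = true <-> a <> b.
Proof. destruct a, b; simpl; split; intros; congruence. Qed.

Lemma xor_cl_iff a b : xorb (cl a) (cl b) = true <-> ((Cl a /\ ~ Cl b) \/ (~ Cl a /\ Cl b)).
Proof.
  split. apply xor_cl.
  unfold cl. intros [[H1 H2]|[H1 H2]].
  - rewrite (proj2 (bP_true _) H1), (proj2 (bP_false _) H2). reflexivity.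
  - rewrite (proj2 (bP_true _) H2), (proj2 (bP_false _) H1). reflexivity.
Qed.

Lemma chi_adj_iff u u' : adjG u u' ->
  (xorb (chiv u) (chiv u') = true <-> (((Cl u /\ ~ Cl u') \/ (~ Cl u /\ Cl u')) /\ crossed C u u')).
Proof.
  destruct u as [x y], u' as [x' y']. unfold adjG, chiv; simpl. intros H.
  assert (Hc : (x' = x+1 /\ y' = y) \/ (x = x'+1 /\ y' = y) \/ (x' = x /\ y' = y+1) \/ (x' = x /\ y = y'+1)) by lia.
  destruct Hc as [[E1 E2]|[[E1 E2]|[[E1 E2]|[E1 E2]]]]; subst.
  - rewrite chi_h'. unfold dh. rewrite andb_true_iff, xor_cl_iff, bP_true, crossed_h_iff. tauto.
  - rewrite xorb_comm, chi_h'. unfold dh. rewrite andb_true_iff, xor_cl_iff, bP_true, <- crossed_h_iff.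
    split; intros [H1 H2]; split; try tauto; apply crossed_sym; auto.
  - rewrite chi_v. unfold dv. rewrite andb_true_iff, xor_cl_iff, bP_true, crossed_v_iff. tauto.
  - rewrite xorb_comm, chi_v. unfold dv. rewrite andb_true_iff, xor_cl_iff, bP_true, <- crossed_v_iff.
    split; intros [H1 H2]; split; try tauto; apply crossed_sym; auto.
Qed.

Lemma chi_eq_noCl u u' : adjG u u' -> ~ Cl u -> ~ Cl u' -> chiv u = chiv u'.
Proof.
  intros H H1 H2. destruct (Bool.bool_dec (chiv u) (chiv u')) as [E|E]; auto.
  exfalso. apply xorb_true_iff' in E. apply (chi_adj_iff _ _ H) in E. tauto.
Qed.

Lemma chi_eq_minus u u' : adj_minus C u u' -> chiv u = chiv u'.
Proof.
  intros [H Hn]. destruct (Bool.bool_dec (chiv u) (chiv u')) as [E|E]; auto.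
  exfalso. apply xorb_true_iff' in E. apply (chi_adj_iff _ _ H) in E. tauto.
Qed.

Lemma chi_neq u u' : adjG u u' -> Cl u -> ~ Cl u' -> crossed C u u' -> chiv u <> chiv u'.
Proof. intros H H1 H2 H3. apply xorb_true_iff'. apply chi_adj_iff; auto. Qed.


Lemma chi_row_zero_aux n : forall x y, Z.to_nat (B+1-x) = n -> B < Z.abs y -> chi x y = false.
Proof.
  induction n; intros x y Hn Hy.
  - apply chi_far; lia.
  - rewrite chi_h. rewrite (IHn (x+1) y) by lia. rewrite dh_zero; auto; apply notCl; lia.
Qed.
Lemma chi_row_zero x y : B < Z.abs y -> chi x y = false.
Proof. intros. eapply chi_row_zero_aux; eauto. Qed.

Lemma chi_left_aux n : forall x y, Z.to_nat (-B-1-x) = n -> x <= -B-1 -> chi x y = chi (-B-1) y.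
Proof.
  induction n; intros x y Hn Hx.
  - replace x with (-B-1) by lia. reflexivity.
  - rewrite chi_h. rewrite (IHn (x+1) y) by lia. rewrite dh_zero; auto; apply notCl; lia.
Qed.

Lemma chi_col_aux n : forall y, Z.to_nat (B+1-y) = n -> chi (-B-1) y = false.
Proof.
  induction n; intros y Hn.
  - apply chi_row_zero. lia.
  - pose proof (chi_v (-B-1) y) as H. rewrite dv_zero in H by (apply notCl; lia).
    rewrite (IHn (y+1)) in H by lia. destruct (chi (-B-1) y); simpl in H; congruence.
Qed.

Lemma chi_true_box x y : chi x y = true -> -B-1 <= x <= B /\ -B <= y <= B.
Proof.
  intros H. split.
  - split.
    + destruct (Z_le_gt_dec x (-B-1)); [|lia].
      rewrite (chi_left_aux _ x y eq_refl) in H by lia.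
      destruct (Z_le_gt_dec y (B+1)).
      * rewrite (chi_col_aux _ y eq_refl) in H. discriminate.
      * rewrite chi_row_zero in H by lia. discriminate.
    + destruct (Z_le_gt_dec x B); [lia|]. rewrite chi_far in H by lia. discriminate.
  - destruct (Z_le_gt_dec (Z.abs y) B); [lia|]. rewrite chi_row_zero in H by lia. discriminate.
Qed.

Hypothesis chi_Cl0 : forall v, Cl v -> chiv v = false.

Definition edge_ok (a b : vertex) : Prop :=
  (Cl a -> ~ Cl b -> chiv b = true) /\ (Cl b -> ~ Cl a -> chiv a = true) /\
  (~ Cl a -> ~ Cl b -> chiv a = chiv b).

Lemma edge_ok_sym a b : edge_ok a b -> edge_ok b a.
Proof. unfold edge_ok. intros [H1 [H2 H3]]. repeat split; auto. intros. symmetry; auto. Qed.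

Lemma cyc4 a b c d : edge_ok a b -> edge_ok b c -> edge_ok c d -> edge_ok d a ->
  (Cl a \/ Cl b \/ Cl c \/ Cl d) -> ~ Cl a -> chiv a = true.
Proof.
  unfold edge_ok. intros [A1 [A2 A3]] [B1 [B2 B3]] [C1 [C2 C3]] [D1 [D2 D3]] Hs Ha.
  destruct (classic (Cl b)) as [Hb|Hb]; auto.
  destruct (classic (Cl d)) as [Hd|Hd]; auto.
  destruct Hs as [Hs|[Hs|[Hs|Hs]]]; try contradiction.
  rewrite A3 by auto. auto.
Qed.

Lemma cyc4_all a b c d : edge_ok a b -> edge_ok b c -> edge_ok c d -> edge_ok d a ->
  (Cl a \/ Cl b \/ Cl c \/ Cl d) -> forall z, (z = a \/ z = b \/ z = c \/ z = d) -> ~ Cl z -> chiv z = true.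
Proof.
  intros Hab Hbc Hcd Hda Hs z Hz Hn.
  destruct Hz as [ -> | [ -> | [ -> | -> ]]].
  - apply (cyc4 a b c d); auto.
  - apply (cyc4 b c d a); auto. tauto.
  - apply (cyc4 c d a b); auto. tauto.
  - apply (cyc4 d a b c); auto. tauto.
Qed.

Lemma side_ok a b : adjG a b -> (w a <> w b -> crossed C a b) -> edge_ok a b.
Proof.
  intros Hab Hc. unfold edge_ok. split; [|split].
  - intros Ha Hb. pose proof (chi_neq a b Hab Ha Hb (Hc (Cl_diff a b Hab Ha Hb))) as N.
    rewrite chi_Cl0 in N by auto. destruct (chiv b); congruence.
  - intros Hb Ha. assert (Hba : adjG b a) by (apply adjG_sym; auto).
    assert (Hd : w b <> w a) by (apply Cl_diff; auto).
    pose proof (chi_neq b a Hba Hb Ha (crossed_sym _ _ (Hc (fun E => Hd (eq_sym E))))) as N.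
    rewrite chi_Cl0 in N by auto. destruct (chiv a); congruence.
  - apply chi_eq_noCl; auto.
Qed.

Lemma face_sides_ok x y : (exists s, In s (own4 x y) /\ C s) ->
  edge_ok (x,y) (x,y+1) /\ edge_ok (x,y+1) (x+1,y+1) /\ edge_ok (x+1,y+1) (x+1,y) /\ edge_ok (x+1,y) (x,y).
Proof.
  intros [s [Hs Cs]].
  split; [|split; [|split]].
  - apply side_ok. unfold adjG; simpl; lia.
    intros Hd. apply crossed_v_iff. eapply face_coh with (s := s); eauto.
    unfold own4; simpl; tauto. apply diff_own_v; auto.
  - apply side_ok. unfold adjG; simpl; lia.
    intros Hd. apply crossed_h_iff. eapply face_coh with (s := s); eauto.
    unfold own4; simpl; tauto. apply diff_own_h; auto.
  - apply edge_ok_sym. apply side_ok. unfold adjG; simpl; lia.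
    intros Hd. apply crossed_v_iff. eapply face_coh with (s := s); eauto.
    unfold own4; simpl; tauto. apply diff_own_v; auto.
  - apply edge_ok_sym. apply side_ok. unfold adjG; simpl; lia.
    intros Hd. apply crossed_h_iff. eapply face_coh with (s := s); eauto.
    unfold own4; simpl; tauto. apply diff_own_h; auto.
Qed.

Lemma corners4 m n v : cornerPQ m n v -> v = (m,n) \/ v = (m,n+1) \/ v = (m+1,n+1) \/ v = (m+1,n).
Proof.
  destruct v as [x y]. unfold cornerPQ; simpl. intros [[ -> | -> ] [ -> | -> ]]; tauto.
Qed.

Lemma corners4' m n v : v = (m,n) \/ v = (m,n+1) \/ v = (m+1,n+1) \/ v = (m+1,n) -> cornerPQ m n v.
Proof. unfold cornerPQ. intros [ -> | [ -> | [ -> | -> ]]]; simpl; lia. Qed.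

Lemma face_noCl_eq m n : (forall z, cornerPQ m n z -> ~ Cl z) ->
  forall v v', cornerPQ m n v -> cornerPQ m n v' -> chiv v = chiv v'.
Proof.
  intros H.
  assert (N1 : ~ Cl (m,n)) by (apply H, corners4'; tauto).
  assert (N2 : ~ Cl (m,n+1)) by (apply H, corners4'; tauto).
  assert (N3 : ~ Cl (m+1,n+1)) by (apply H, corners4'; tauto).
  assert (N4 : ~ Cl (m+1,n)) by (apply H, corners4'; tauto).
  assert (E1 : chiv (m,n) = chiv (m,n+1)) by (apply chi_eq_noCl; auto; unfold adjG; simpl; lia).
  assert (E2 : chiv (m,n+1) = chiv (m+1,n+1)) by (apply chi_eq_noCl; auto; unfold adjG; simpl; lia).
  assert (E3 : chiv (m+1,n+1) = chiv (m+1,n)) by (apply chi_eq_noCl; auto; unfold adjG; simpl; lia).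
  intros v v' Hv Hv'.
  apply corners4 in Hv. apply corners4 in Hv'.
  destruct Hv as [ -> | [ -> | [ -> | -> ]]]; destruct Hv' as [ -> | [ -> | [ -> | -> ]]]; congruence.
Qed.

Lemma node_white p q e : present w e -> node p q e -> Z.even (p+q) = false.
Proof.
  intros He Hn. destruct e as [[m n] o]. apply present_black in He. apply black_ex in He.
  destruct He as [k Hk].
  destruct (Z.even (p+q)) eqn:E; auto. apply Z.even_spec in E. destruct E as [j Hj].
  unfold node in Hn. exfalso.
  destruct Hn as [Hn|[Hn|[Hn|Hn]]]; injection Hn; intros; subst; lia.
Qed.

Lemma node_in_own4 p q e : Z.even (p+q) = false -> node p q e -> In e (own4 p q).
Proof.
  intros E Hn. unfold own4. destruct (owners_odd p q E) as [E1 [E2 [E3 E4]]].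
  rewrite E1, E2, E3, E4. unfold node in Hn. simpl. destruct Hn as [ -> | [ -> | [ -> | -> ]]]; tauto.
Qed.

Lemma node_Wcorner p q e : node p q e -> exists v, corner e v /\ cornerPQ p q v.
Proof.
  unfold node, corner, cornerPQ. intros [ -> | [ -> | [ -> | -> ]]].
  - exists (p,q). simpl. lia.
  - exists (p+1,q). simpl. lia.
  - exists (p,q). simpl. lia.
  - exists (p,q+1). simpl. lia.
Qed.

Lemma node_Clcorner p q e v : present w e -> node p q e -> corner e v -> Cl v ->
  exists z, cornerPQ p q z /\ Cl z.
Proof.
  intros He Hn Hv HCl. destruct v as [x y].
  unfold node in Hn. destruct Hn as [ -> | [ -> | [ -> | -> ]]]; unfold corner, cornerPQ in Hv; simpl in Hv;
    destruct Hv as [Hx Hy].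
  - destruct (Z.eq_dec x p).
    + exists (x,y). split; [unfold cornerPQ; simpl; lia | auto].
    + exists (p,y). split; [unfold cornerPQ; simpl; lia|].
      assert (x = p - 1) by lia. subst x.
      eapply Cl_step; eauto. unfold adjG; simpl; lia.
      pose proof (presH_same (p-1) q y He ltac:(lia)) as E. replace (p-1+1) with p in E by lia. auto.
  - destruct (Z.eq_dec x (p+1)).
    + exists (x,y). split; [unfold cornerPQ; simpl; lia | auto].
    + exists (p+1,y). split; [unfold cornerPQ; simpl; lia|].
      assert (x = p + 1 + 1) by lia. subst x.
      eapply Cl_step; eauto. unfold adjG; simpl; lia.
      pose proof (presH_same (p+1) q y He ltac:(lia)) as E. auto.
  - destruct (Z.eq_dec y q).
    + exists (x,y). split; [unfold cornerPQ; simpl; lia | auto].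
    + exists (x,q). split; [unfold cornerPQ; simpl; lia|].
      assert (y = q - 1) by lia. subst y.
      eapply Cl_step; eauto. unfold adjG; simpl; lia.
      pose proof (presV_same p (q-1) x He ltac:(lia)) as E. replace (q-1+1) with q in E by lia. auto.
  - destruct (Z.eq_dec y (q+1)).
    + exists (x,y). split; [unfold cornerPQ; simpl; lia | auto].
    + exists (x,q+1). split; [unfold cornerPQ; simpl; lia|].
      assert (y = q + 1 + 1) by lia. subst y.
      eapply Cl_step; eauto. unfold adjG; simpl; lia.
      pose proof (presV_same p (q+1) x He ltac:(lia)) as E. auto.
Qed.

Definition Pf (f : cedge) : Prop :=
  (exists v, corner f v /\ Cl v) \/ (forall v, corner f v -> chiv v = true).

Lemma propagate p q e f : C e -> C f -> node p q e -> node p q f -> Pf e -> Pf f.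
Proof.
  intros Ce Cf Hne Hnf HPe.
  destruct (classic (exists v, corner f v /\ Cl v)) as [Hc|Hc]; [left; auto|right].
  assert (Pfp : present w f) by (apply C_present; auto).
  assert (Pep : present w e) by (apply C_present; auto).
  assert (Hwh : Z.even (p+q) = false) by (eapply node_white; eauto).
  destruct (node_Wcorner p q f Hnf) as [wf [Hwf1 Hwf2]].
  assert (Heq : forall v, corner f v -> chiv v = chiv wf).
  { destruct f as [[m n] o]. unfold corner in *. intros v Hv. apply face_noCl_eq with m n; auto.
    intros z Hz HCz. apply Hc. exists z; split; auto. }
  intros v Hv. rewrite (Heq v Hv).
  assert (Hwfn : ~ Cl wf) by (intros HCw; apply Hc; exists wf; split; auto).
  destruct (face_sides_ok p q) as [S1 [S2 [S3 S4]]].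
  { exists f. split; auto. apply node_in_own4; auto. }
  destruct (classic (exists z, cornerPQ p q z /\ Cl z)) as [Hz|Hz].
  - apply (cyc4_all (p,q) (p,q+1) (p+1,q+1) (p+1,q)); auto.
    + destruct Hz as [z [Hz1 Hz2]]. apply corners4 in Hz1.
      destruct Hz1 as [ -> | [ -> | [ -> | -> ]]]; tauto.
    + apply corners4 in Hwf2. tauto.
  - destruct HPe as [HPe|HPe].
    + exfalso. destruct HPe as [v' [Hv1 Hv2]]. apply Hz. eapply node_Clcorner; eauto.
    + destruct (node_Wcorner p q e Hne) as [we [Hwe1 Hwe2]].
      rewrite (face_noCl_eq p q) with (v' := we); auto.
      intros z Hz1 Hz2. apply Hz. exists z; auto.
Qed.

End Model.


Lemma rt_mono {T} (R S : T -> T -> Prop) a b :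
  (forall x y, R x y -> S x y) -> clos_refl_trans T R a b -> clos_refl_trans T S a b.
Proof. intros H. induction 1. apply rt_step; auto. apply rt_refl. eapply rt_trans; eauto. Qed.

Lemma rt_symm {T} (R : T -> T -> Prop) a b :
  (forall x y, R x y -> R y x) -> clos_refl_trans T R a b -> clos_refl_trans T R b a.
Proof. intros H. induction 1. apply rt_step; auto. apply rt_refl. eapply rt_trans; eauto. Qed.

Lemma rt_const {T} (R : T -> T -> Prop) (f : T -> bool) a b :
  (forall x y, R x y -> f x = f y) -> clos_refl_trans T R a b -> f a = f b.
Proof. intros H. induction 1; auto. congruence. Qed.

Lemma line_x n : forall x y, clos_refl_trans vertex adjG (x,y) (x + Z.of_nat n, y).
Proof.
  induction n; intros x y.
  - replace (x + Z.of_nat 0) with x by lia. apply rt_refl.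
  - eapply rt_trans. apply IHn. apply rt_step. unfold adjG; simpl; lia.
Qed.
Lemma line_y n : forall x y, clos_refl_trans vertex adjG (x,y) (x, y + Z.of_nat n).
Proof.
  induction n; intros x y.
  - replace (y + Z.of_nat 0) with y by lia. apply rt_refl.
  - eapply rt_trans. apply IHn. apply rt_step. unfold adjG; simpl; lia.
Qed.

Lemma G_conn (a b : vertex) : clos_refl_trans vertex adjG a b.
Proof.
  destruct a as [x y], b as [x' y'].
  apply rt_trans with (x', y).
  - destruct (Z_le_gt_dec x x').
    + replace x' with (x + Z.of_nat (Z.to_nat (x' - x))) by lia. apply line_x.
    + apply rt_symm. apply adjG_sym.
      replace x with (x' + Z.of_nat (Z.to_nat (x - x'))) by lia. apply line_x.
  - destruct (Z_le_gt_dec y y').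
    + replace y' with (y + Z.of_nat (Z.to_nat (y' - y))) by lia. apply line_y.
    + apply rt_symm. apply adjG_sym.
      replace y with (y' + Z.of_nat (Z.to_nat (y - y'))) by lia. apply line_y.
Qed.

Lemma crossed_info (w : config) (C : cedge -> Prop) u u' :
  (forall e, C e -> present w e) -> adjG u u' -> crossed C u u' ->
  exists e, C e /\ corner e u /\ w u <> w u'.
Proof.
  intros HP Hadj [[[m n] o] [Ce Hm]]. exists (m,n,o). split; auto.
  pose proof (HP _ Ce) as Hp.
  destruct u as [x y], u' as [x' y']. unfold adjG in Hadj; simpl in Hadj.
  unfold corner, cornerPQ; simpl.
  assert (Hc : (x' = x+1 /\ y' = y) \/ (x = x'+1 /\ y' = y) \/ (x' = x /\ y' = y+1) \/ (x' = x /\ y = y'+1)) by lia.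
  destruct Hc as [[E1 E2]|[[E1 E2]|[[E1 E2]|[E1 E2]]]]; subst.
  - apply geo1h in Hm. destruct Hm as [-> [-> Hy]]. split; [lia|].
    apply presV_diff with n; auto.
  - apply segs_meet_sym, segs_meet_sym in Hm.
    destruct Hm as [P [H1 H2]]. assert (Hm' : segs_meet (ptZ (x',y)) (ptZ (x'+1,y)) (cedge_A (m,n,o)) (cedge_B (m,n,o))).
    { exists P. split; auto. apply on_seg_rev; auto. }
    apply geo1h in Hm'. destruct Hm' as [-> [-> Hy]]. split; [lia|].
    intros E. apply (presV_diff w m n y Hp Hy). auto.
  - apply geo1v in Hm. destruct Hm as [-> [-> Hx]]. split; [lia|].
    apply presH_diff with m; auto.
  - destruct Hm as [P [H1 H2]]. assert (Hm' : segs_meet (ptZ (x,y')) (ptZ (x,y'+1)) (cedge_A (m,n,o)) (cedge_B (m,n,o))).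
    { exists P. split; auto. apply on_seg_rev; auto. }
    apply geo1v in Hm'. destruct Hm' as [-> [-> Hx]]. split; [lia|].
    intros E. apply (presH_diff w m n x Hp Hx). auto.
Qed.

Lemma zlist a b : exists l, forall z, a <= z <= b -> In z l.
Proof.
  exists (map (fun k => a + Z.of_nat k) (seq 0 (Z.to_nat (b - a + 1)))).
  intros z Hz. apply in_map_iff. exists (Z.to_nat (z - a)). split; [lia|].
  apply in_seq. lia.
Qed.

Lemma vbox a b : exists l, forall v : vertex, a <= fst v <= b -> a <= snd v <= b -> In v l.
Proof.
  destruct (zlist a b) as [l Hl]. exists (list_prod l l).
  intros [x y] Hx Hy. apply in_prod; auto.
Qed.

Lemma ebox a b : exists l, forall m n o, a <= m <= b -> a <= n <= b -> In ((m,n,o) : cedge) l.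
Proof.
  destruct (zlist a b) as [l Hl]. exists (list_prod (list_prod l l) (Hor :: Ver :: nil)).
  intros m n o Hm Hn. apply in_prod. apply in_prod; auto. destruct o; simpl; auto.
Qed.

Lemma inf_contra {T} (P : T -> Prop) l : infinite P -> (forall x, P x -> In x l) -> False.
Proof. intros Hi Hl. destruct (Hi l) as [x [Hx Hn]]. apply Hn; auto. Qed.

Lemma list_bound (l : list vertex) : exists B, forall v, In v l -> Z.abs (fst v) <= B /\ Z.abs (snd v) <= B.
Proof.
  induction l as [|a l IH].
  - exists 0. intros v [].
  - destruct IH as [B HB]. exists (Z.max B (Z.max (Z.abs (fst a)) (Z.abs (snd a)))).
    intros v [<-|Hv]. lia. apply HB in Hv. lia.
Qed.

Lemma not_inf {T} (P : T -> Prop) : ~ infinite P -> exists l, forall x, P x -> In x l.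
Proof.
  intros H. unfold infinite in H. apply not_all_ex_not in H. destruct H as [l Hl].
  exists l. intros x Hx. apply NNPP. intros Hn. apply Hl. exists x. auto.
Qed.

Lemma path_exit (C : cedge -> Prop) (K : vertex -> Prop) a b :
  clos_refl_trans_1n vertex adjG a b -> (forall x y, K x -> adj_minus C x y -> K y) -> K a ->
  K b \/ exists u u', K u /\ adjG u u' /\ crossed C u u'.
Proof.
  intros Hp Ks. induction Hp as [x|x y z Hxy Hyz IH]; intros Kx.
  - left; auto.
  - destruct (classic (crossed C x y)) as [Hc|Hc].
    + right. exists x, y. auto.
    + apply IH. apply Ks with x; auto. split; auto.
Qed.

Theorem lemma2p7 (w : config) (C : cedge -> Prop) :
  in_Omega w -> is_contour w C -> infinite C ->
  forall K : vertex -> Prop,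
    is_component_minus C K -> infinite K ->
    exists Cl : vertex -> Prop,
      is_cluster w Cl /\ infinite Cl /\ (forall v, Cl v -> K v) /\ incident Cl C.
Proof.
  intros Hw [e0 [He0 HC]] HCinf K [v0 HK] HKinf.
  assert (CP : forall e, C e -> present w e) by (apply (C_present w C e0 He0 HC)).
  assert (Kstep : forall a b, K a -> adj_minus C a b -> K b).
  { intros a b Ha Hab. apply HK. apply HK in Ha. eapply rt_trans; eauto. apply rt_step; auto. }
  assert (Hu : exists u e1, K u /\ C e1 /\ corner e1 u).
  { destruct e0 as [[m n] o] eqn:Ee0.
    assert (Hpath : clos_refl_trans_1n vertex adjG v0 (m,n)) by (apply clos_rt_rt1n, G_conn).
    assert (Hex : K (m,n) \/ exists u u', K u /\ adjG u u' /\ crossed C u u').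
    { apply path_exit with v0; auto. apply HK; apply rt_refl. }
    destruct Hex as [Hk|[u [u' [Hk [Hadj Hc]]]]].
    - exists (m,n), e0. split; auto. split. apply HC. subst e0. apply rt_refl.
      subst e0. unfold corner, cornerPQ; simpl. lia.
    - destruct (crossed_info w C u u' CP Hadj Hc) as [e [Ce [Hco _]]].
      exists u, e. auto. }
  destruct Hu as [u [e1 [Ku [Ce1 Hco]]]].
  assert (ClK : forall v, Cl w u v -> K v).
  { intros v Hv. apply HK. apply HK in Ku. eapply rt_trans; [exact Ku|].
    unfold Cl in Hv. revert Hv. apply rt_mono.
    intros x y [Hxy Hs]. split; auto. intros Hc.
    destruct (crossed_info w C x y CP Hxy Hc) as [e [_ [_ Hd]]]. auto. }
  assert (Hinc : incident (Cl w u) C).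
  { exists u, e1. split. apply rt_refl. split; auto. apply corner_dist; auto. }
  assert (Hcl : is_cluster w (Cl w u)).
  { exists u. intros v. unfold Cl, same. tauto. }
  exists (Cl w u). split; auto. split; [|split; auto].
  apply NNPP. intros Hfin. apply not_inf in Hfin. destruct Hfin as [l Hl].
  destruct (list_bound l) as [B HB0].
  assert (HB : forall v, Cl w u v -> Z.abs (fst v) <= B /\ Z.abs (snd v) <= B) by (intros; apply HB0, Hl; auto).
  set (X := chiv w C u B).
  assert (XK : forall a, K a -> X a = X v0).
  { intros a Ha. apply HK in Ha. symmetry. apply (rt_const (adj_minus C) X) in Ha; auto.
    intros x y Hxy. apply (chi_eq_minus w Hw C e0 He0 HC u B HB); auto. }
  destruct (X u) eqn:Xu.
  -
    destruct (vbox (-B-1) B) as [lb Hlb].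
    apply (inf_contra K lb HKinf). intros [x y] Ha.
    assert (Xa : X (x,y) = true) by (rewrite XK, <- (XK u); auto).
    apply (chi_true_box w Hw C e0 He0 HC u B HB) in Xa. simpl in Xa. apply Hlb; simpl; lia.
  - assert (X0 : forall v, Cl w u v -> X v = false).
    { intros v Hv. rewrite XK by auto. rewrite <- (XK u); auto. }
    assert (RC : forall a b, clos_refl_trans cedge (cadj w) a b -> C a -> C b).
    { intros a b Hab. induction Hab; auto. intros; eapply C_step; eauto. }
    assert (Hall : forall a b, clos_refl_trans cedge (cadj w) a b -> C a -> Pf w C u B a -> Pf w C u B b).
    { intros a b Hab. induction Hab as [a b Hab| a | a b c H1 IH1 H2 IH2]; auto.
      - intros Ca Pa. pose proof Hab as Hab'. destruct Hab' as [Pa' [Pb' Hm]].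
        destruct (geo2 w a b Pa' Pb' Hm) as [<- | [p [q [Hna Hnb]]]]; auto.
        apply (propagate w Hw C e0 He0 HC u B HB X0 p q a b); auto.
        eapply C_step; eauto.
      - intros Ca Pa. apply IH2. eapply RC; eauto. auto. }
    assert (PfC : forall f, C f -> Pf w C u B f).
    { intros f Cf. apply Hall with e1; auto.
      - apply HC in Ce1. apply HC in Cf. eapply rt_trans; [|exact Cf].
        apply rt_symm; auto. intros x y [H1 [H2 H3]]. split; auto. split; auto.
        destruct H3 as [P [Q1 Q2]]. exists P; auto.
      - left. exists u. split; auto. apply rt_refl. }
    destruct (ebox (-B-1) B) as [le Hle].
    apply (inf_contra C le HCinf). intros [[m n] o] Cf.
    destruct (PfC _ Cf) as [[v [Hv HClv]]|Hv].
    + apply HB in HClv. destruct v as [x y]. unfold corner, cornerPQ in Hv; simpl in *. apply Hle; lia.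
    + pose proof (Hv (m,n) ltac:(unfold corner, cornerPQ; simpl; lia)) as Hx.
      apply (chi_true_box w Hw C e0 He0 HC u B HB) in Hx. simpl in Hx. apply Hle; lia.
Qed.
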